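(* Let $T$ be any shortest-path tree of $G$ rooted at $s$, let $R$ be the forest obtained from $T$ by deleting the edges in $E(T)\cap E(D)$, and let $\widetilde{E}$ be the set of edges $\{x,y\}\in E\setminus(E(T)\cup E(D))$ whose endpoints lie in different connected components of $R$. For an ordered pair $(x,y)$ of vertices define $f(x,y)=d_s(x)+w(x,y)+d_t(y)$ if $\{x,y\}\in\widetilde{E}$ and $f(x,y)=\infty$ otherwise. If $(x,y)$ minimizes $f$ over all ordered pairs and $f(x,y)\neq\infty$, then there exists a simple $st$-path of length $f(x,y)$ containing an edge of $\widetilde{E}$, and such a path is an optimal outward path.
   Context: $G=(V,E,w)$ is a simple, connected, undirected graph with positive edge lengths, $s,t\in V$, $d(\cdot,\cdot)$ the shortest path distance, $d_s(v)=d(s,v)$, $d_t(v)=d(v,t)$. A path is always simple; an $st$-path is a simple path from $s$ to $t$, and its length is the sum of its edge lengths. $D$ is the subgraph formed by the union of all shortest $st$-paths of $G$. An optimal outward path is an $st$-path of minimum length among all $st$-paths containing at least one edge of $E\setminus E(D)$. Note $f(x,y)$ and $f(y,x)$ differ in general. *)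

(* Defs.v *)
From HB Require Import structures.
From mathcomp Require Import all_boot all_order all_algebra.
From mathcomp Require Import boolp classical_sets reals constructive_ereal.

Set Implicit Arguments.
Unset Strict Implicit.
Unset Printing Implicit Defensive.

Import Order.TTheory GRing.Theory Num.Theory.
Local Open Scope ring_scope.
Local Open Scope classical_set_scope.

Section GraphDefs.
Context {V : finType} {R : realType}.

Fixpoint walk_in (r : V -> V -> Prop) (x : V) (p : seq V) : Prop :=
  match p with
  | [::] => True
  | y :: q => r x y /\ walk_in r y q
  end.

Definition spath (r : V -> V -> Prop) (u : V) (p : seq V) (v : V) : Prop :=
  [/\ walk_in r u p, last u p = v & uniq (u :: p)].

Definition plen (w : V -> V -> R) (u : V) (p : seq V) : R :=
  \sum_(k <- zip (u :: p) p) w k.1 k.2.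

Definition on_path (u : V) (p : seq V) (x y : V) : Prop :=
  (x, y) \in zip (u :: p) p \/ (y, x) \in zip (u :: p) p.

Definition dist (e : rel V) (w : V -> V -> R) (u v : V) : R :=
  inf [set plen w u p | p in [set p | spath (fun a b => e a b) u p v]].

Definition sp_tree (e : rel V) (w : V -> V -> R) (s : V)
    (ET : V -> V -> Prop) : Prop :=
  [/\ (forall x y, ET x y -> e x y),
      (forall x y, ET x y -> ET y x),
      (forall v, exists p, walk_in ET s p /\ last s p = v),
      (* acyclic: no cycle (of length >= 3) in ET *)
      (~ exists x p, [/\ uniq (x :: p), (2 <= size p)%N, walk_in ET x p
                        & ET (last x p) x])
    &
      (forall v, exists p, spath ET s p v /\ plen w s p = dist e w s v)].

(* {x,y} is an edge of D, the union of all shortest st-paths *)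
Definition inD (e : rel V) (w : V -> V -> R) (s t x y : V) : Prop :=
  exists p, [/\ spath (fun a b => e a b) s p t,
               plen w s p = dist e w s t & on_path s p x y].

Definition forestR (e : rel V) (w : V -> V -> R) (s t : V)
    (ET : V -> V -> Prop) (x y : V) : Prop :=
  ET x y /\ ~ inD e w s t x y.

Definition same_comp (e : rel V) (w : V -> V -> R) (s t : V)
    (ET : V -> V -> Prop) (x y : V) : Prop :=
  exists p, walk_in (forestR e w s t ET) x p /\ last x p = y.

Definition Etilde (e : rel V) (w : V -> V -> R) (s t : V)
    (ET : V -> V -> Prop) (x y : V) : Prop :=
  [/\ e x y, ~ ET x y, ~ inD e w s t x y & ~ same_comp e w s t ET x y].

Definition fval (e : rel V) (w : V -> V -> R) (s t : V)
    (ET : V -> V -> Prop) (x y : V) : \bar R :=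
  if pselect (Etilde e w s t ET x y)
  then (dist e w s x + w x y + dist e w y t)%:E
  else +oo%E.

Definition outward (e : rel V) (w : V -> V -> R) (s t : V) (p : seq V) : Prop :=
  spath (fun a b => e a b) s p t /\
  exists x y, on_path s p x y /\ ~ inD e w s t x y.

Definition optimal_outward (e : rel V) (w : V -> V -> R) (s t : V)
    (p : seq V) : Prop :=
  outward e w s t p /\
  forall q, outward e w s t q -> plen w s p <= plen w s q.

End GraphDefs.

(* Main.v *)
Require Import Defs.
From HB Require Import structures.
From mathcomp Require Import all_boot all_order all_algebra.
From mathcomp Require Import boolp classical_sets reals constructive_ereal.
From mathcomp Require Import lra.

Set Implicit Arguments.
Unset Strict Implicit.
Unset Printing Implicit Defensive.
Import Order.TTheory GRing.Theory Num.Theory.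
Local Open Scope ring_scope.

Section Gen.
Variables (V : finType).

Section W.
Variables (R : realType) (w : V -> V -> R).
Lemma plen_nil x : plen w x [::] = 0.
Proof. by rewrite /plen big_nil. Qed.

Lemma plen_cons x y p : plen w x (y :: p) = w x y + plen w y p.
Proof. by rewrite /plen /= big_cons. Qed.

Lemma plen_cat x p1 p2 : plen w x (p1 ++ p2) = plen w x p1 + plen w (last x p1) p2.
Proof.
elim: p1 x => [|y p1 IH] x /=; first by rewrite plen_nil add0r.
by rewrite !plen_cons IH addrA.
Qed.

End W.
Lemma walk_cat (r : V -> V -> Prop) x p1 p2 :
  walk_in r x (p1 ++ p2) <-> walk_in r x p1 /\ walk_in r (last x p1) p2.
Proof.
elim: p1 x => [|y p1 IH] x /=; first by split => // -[].
rewrite IH; tauto.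
Qed.

Lemma walk_zip (r : V -> V -> Prop) x p :
  walk_in r x p <-> forall a b, (a, b) \in zip (x :: p) p -> r a b.
Proof.
elim: p x => [|y p IH] x /=; first by split => // _ a b; rewrite in_nil.
rewrite IH; split.
  move=> [rxy H] a b; rewrite in_cons => /orP[/eqP[-> ->] //|]; exact: H.
move=> H; split; first by apply: H; rewrite mem_head.
by move=> a b hab; apply: H; rewrite in_cons hab orbT.
Qed.

Lemma walk_impl (r r' : V -> V -> Prop) x p :
  (forall a b, r a b -> r' a b) -> walk_in r x p -> walk_in r' x p.
Proof. by move=> H; elim: p x => //= y p IH x [/H ? /IH]. Qed.

Section W2.
Variables (R : realType) (w : V -> V -> R).
Lemma plen_ge0 (r : V -> V -> Prop) x p :
  (forall a b, r a b -> 0 < w a b) -> walk_in r x p -> 0 <= plen w x p.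
Proof.
move=> hp; elim: p x => [|y p IH] x /=; first by rewrite plen_nil.
move=> [/hp h /IH h2]; rewrite plen_cons; lra.
Qed.

Lemma plen_gt0 (r : V -> V -> Prop) x p :
  (forall a b, r a b -> 0 < w a b) -> walk_in r x p -> p != [::] -> 0 < plen w x p.
Proof.
move=> hp; case: p => [|y p] //= [/hp h /(plen_ge0 hp) h2] _; rewrite plen_cons; lra.
Qed.

End W2.
Lemma split_vertex (z x : V) p : z \in p ->
  exists p1 p2, [/\ p = p1 ++ p2, last x p1 = z & p1 != [::]].
Proof.
elim: p x => [|y p IH] x //; rewrite in_cons => /orP[/eqP->|/(IH y)[p1 [p2 [-> <- _]]]].
  by exists [:: y], p.
by exists (y :: p1), p2.
Qed.

Lemma split_vertex0 (z x : V) p : z \in x :: p ->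
  exists p1 p2, p = p1 ++ p2 /\ last x p1 = z.
Proof.
rewrite in_cons => /orP[/eqP->|/(split_vertex x)[p1 [p2 [-> <- _]]]].
  by exists [::], p.
by exists p1, p2.
Qed.

Lemma split_edge (a b x : V) p : (a, b) \in zip (x :: p) p ->
  exists p1 p2, p = p1 ++ b :: p2 /\ last x p1 = a.
Proof.
elim: p x => [|y p IH] x //=; rewrite in_cons => /orP[/eqP[-> ->]|/(IH y)[p1 [p2 [-> <-]]]].
  by exists [::], p.
by exists (y :: p1), p2.
Qed.

Lemma zip_mid (x y : V) p1 p2 :
  (last x p1, y) \in zip (x :: p1 ++ y :: p2) (p1 ++ y :: p2).
Proof.
elim: p1 x => [|z p1 IH] x /=; first by rewrite mem_head.
by rewrite in_cons IH orbT.
Qed.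

Lemma zip_cat_sub (x : V) p1 p2 a b : (a, b) \in zip (x :: p1) p1 ->
  (a, b) \in zip (x :: p1 ++ p2) (p1 ++ p2).
Proof.
elim: p1 x => [|z p1 IH] x //=; rewrite !in_cons => /orP[->//|/IH->]; by rewrite orbT.
Qed.

Lemma zip_cat_sub2 (x : V) p1 p2 a b : (a, b) \in zip (last x p1 :: p2) p2 ->
  (a, b) \in zip (x :: p1 ++ p2) (p1 ++ p2).
Proof.
elim: p1 x => [|z p1 IH] x //= H; by rewrite in_cons IH ?orbT.
Qed.

Lemma zip_mem (x a b : V) p : (a, b) \in zip (x :: p) p -> a \in x :: p /\ b \in p.
Proof.
elim: p x => [|y p IH] x //=; rewrite in_cons => /orP[/eqP[-> ->]|/(IH y)[h1 h2]].
  by rewrite !mem_head.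
by rewrite in_cons h1 orbT in_cons h2 orbT.
Qed.

Lemma uniq_split (x : V) p1 p2 : uniq (x :: p1 ++ p2) ->
  uniq (x :: p1) /\ uniq (last x p1 :: p2).
Proof.
rewrite -cat_cons cat_uniq => /and3P[h1 h2 h3]; split => //=.
rewrite h3 andbT; apply/negP => hl; move/hasP: h2; apply; exists (last x p1) => //.
exact: mem_last.
Qed.

Lemma spath_split (r : V -> V -> Prop) x p1 p2 y : spath r x (p1 ++ p2) y ->
  spath r x p1 (last x p1) /\ spath r (last x p1) p2 y.
Proof.
move=> [/walk_cat [h1 h2] hl /uniq_split [u1 u2]].
by split; split => //; rewrite -hl last_cat.
Qed.

Lemma walk_rev (r : V -> V -> Prop) x p : (forall a b, r a b -> r b a) ->
  walk_in r x p -> walk_in r (last x p) (rev (belast x p)).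
Proof.
move=> hs; elim: p x => [|y p IH] x //= [hxy /IH hw].
rewrite rev_cons -cats1; apply/walk_cat; split => //=; split => //.
suff -> : last (last y p) (rev (belast y p)) = y by apply: hs.
by case: p {IH hw} => //= z p; rewrite rev_cons last_rcons.
Qed.

Lemma last_rev_belast (x : V) p : last (last x p) (rev (belast x p)) = x.
Proof. by case: p => //= z p; rewrite rev_cons last_rcons. Qed.

Section W3.
Variables (R : realType) (w : V -> V -> R).
Lemma plen_rev (r : V -> V -> Prop) x p : (forall a b, r a b -> w a b = w b a) ->
  walk_in r x p -> plen w (last x p) (rev (belast x p)) = plen w x p.
Proof.
move=> hs; elim: p x => [|y p IH] x //= [hxy /IH hw].
rewrite rev_cons -cats1 plen_cat hw last_rev_belast plen_cons plen_nil addr0 plen_cons.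
by rewrite (hs _ _ hxy) addrC.
Qed.

End W3.
Lemma uniq_rev_belast (x : V) p : uniq (last x p :: rev (belast x p)) = uniq (x :: p).
Proof. by rewrite -rev_rcons -lastI rev_uniq. Qed.

Section W4.
Variables (R : realType) (w : V -> V -> R).
Lemma shorten_walk (r : V -> V -> Prop) :
  (forall a b, r a b -> 0 < w a b) ->
  forall p x, walk_in r x p -> exists q, [/\ walk_in r x q, last x q = last x p,
    uniq (x :: q), {subset q <= p} &
    plen w x q <= plen w x p /\ (~~ uniq (x :: p) -> plen w x q < plen w x p)].
Proof.
move=> hp p; move: {2}(size p) (leqnn (size p)) => n; elim: n p => [|n IH] p.
  rewrite leqn0 => /nilP -> x _; exists [::]; split => //; split => //.
move=> hs x hw; case hu: (uniq (x :: p)).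
  by exists p; split => //; split.
case hx: (x \in p).
  have [p1 [p2 [ep hl hne]]] := split_vertex x hx.
  move: hw; rewrite ep => /walk_cat [hw1]; rewrite hl => hw2.
  have hs2 : (size p2 <= n)%N.
    move: hs; rewrite ep size_cat; case: p1 hne {ep hl hw1} => //= ? ? _.
    by rewrite addSn ltnS; apply: leq_trans; rewrite leq_addl.
  have [q [hq1 hq2 hq3 hq4 [hq5 _]]] := IH p2 hs2 x hw2.
  have h1 := plen_gt0 hp hw1 hne.
  exists q; split => //.
  - by rewrite hq2 last_cat hl.
  - by move=> z /hq4 hz; rewrite mem_cat hz orbT.
  - by rewrite plen_cat hl; split => [|_]; lra.
case: p hs hw hu hx => [|y p'] // hs [hxy hw] hu hx.
have hu' : ~~ uniq (y :: p').
  by move: hu; rewrite cons_uniq hx; case: (uniq (y::p')).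
have [q [hq1 hq2 hq3 hq4 [hq5 hq6]]] := IH p' hs y hw.
exists (y :: q); split => //.
- rewrite cons_uniq hq3 andbT; apply/negP; rewrite in_cons => /orP[/eqP hxy'|/hq4 hxq].
    by move: hx; rewrite hxy' mem_head.
  by move: hx; rewrite in_cons hxq orbT.
- by move=> z; rewrite !in_cons => /orP[->//|/hq4 ->]; rewrite orbT.
- rewrite !plen_cons; split => [|_]; first lra.
  have := hq6 hu'; lra.
Qed.

End W4.
Section W5.
Variables (R : realType).
Lemma seq_min (T : eqType) (l : seq T) (g : T -> R) (P : T -> Prop) :
  (exists x, x \in l /\ P x) ->
  exists x, [/\ x \in l, P x & forall y, y \in l -> P y -> g x <= g y].
Proof.
elim: l => [|a l IH] [x [hx hP]]; first by rewrite in_nil in hx.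
case: (pselect (exists x, x \in l /\ P x)) => [/IH [m [hm hPm hmin]]|hno].
  case: (pselect (P a)) => hPa.
    have [hle|hlt] := leP (g a) (g m).
      exists a; split => //; first exact: mem_head.
      move=> y; rewrite in_cons => /orP[/eqP->//|hy hPy].
      exact: le_trans hle (hmin y hy hPy).
    exists m; split => //; first by rewrite in_cons hm orbT.
    move=> y; rewrite in_cons => /orP[/eqP->|hy hPy]; [move=> _; exact: (ltW hlt)|exact: hmin].
  exists m; split => //; first by rewrite in_cons hm orbT.
  by move=> y; rewrite in_cons => /orP[/eqP->//|hy hPy]; apply: hmin.
move: hx; rewrite in_cons => /orP[/eqP ea|hx]; last by exfalso; apply: hno; exists x.
exists a; split; [exact: mem_head|by rewrite -ea|].
move=> y; rewrite in_cons => /orP[/eqP->//|hy hPy]; exfalso; apply: hno; by exists y.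
Qed.
End W5.
Fixpoint allp (n : nat) : seq (seq V) :=
  if n is n'.+1 then [::] :: [seq x :: p | x <- enum V, p <- allp n'] else [:: [::]].

Lemma allpP n p : (size p <= n)%N -> p \in allp n.
Proof.
elim: n p => [|n IH] [|x p] //= hs; try exact: mem_head.
rewrite in_cons; apply/orP; right; apply: allpairs_f; first by rewrite mem_enum.
exact: IH.
Qed.

Lemma size_uniq_card (p : seq V) : uniq p -> (size p <= #|V|)%N.
Proof. by move/card_uniqP <-; exact: max_card. Qed.

End Gen.

Section Main.
Variables (V : finType) (R : realType) (e : rel V) (w : V -> V -> R)
  (s t : V) (ET : V -> V -> Prop).
Hypotheses (e_irr : irreflexive e) (e_sym : symmetric e)
  (w_sym : forall x y, e x y -> w x y = w y x)
  (w_pos : forall x y, e x y -> 0 < w x y)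
  (G_conn : forall u v, exists p, spath (fun a b => e a b) u p v)
  (hT : sp_tree e w s ET).

Local Notation d := (dist e w).
Local Notation E := (fun a b : V => e a b).

Lemma E_pos : forall a b, E a b -> 0 < w a b.
Proof. exact: w_pos. Qed.

Lemma dist_le u p v : spath E u p v -> d u v <= plen w u p.
Proof.
move=> hp; rewrite /dist.
have hlb : has_lbound [set plen w u p | p in [set p | spath E u p v]].
  by exists 0 => y [q [hq _ _] <-]; exact: plen_ge0 E_pos hq.
by apply: (ge_inf hlb); exists p.
Qed.

Lemma dist_attain u v : exists p, spath E u p v /\ plen w u p = d u v.
Proof.
have [p0 hp0] := G_conn u v.
have hsz q : spath E u q v -> q \in allp V #|V|.
  move=> [_ _ hu]; apply: allpP; apply: leq_trans (size_uniq_card hu); exact: leqnSn.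
have [m [_ hm hmin]] := seq_min (plen w u) (P := fun q => spath E u q v)
  (ex_intro _ p0 (conj (hsz _ hp0) hp0)).
exists m; split => //; apply/eqP; rewrite eq_le dist_le // andbT /dist.
apply: lb_le_inf; first by exists (plen w u m), m.
by move=> y [q hq <-]; apply: hmin => //; exact: hsz.
Qed.

Lemma walk_dist x p : walk_in E x p -> d x (last x p) <= plen w x p.
Proof.
move=> hw; have [q [hq1 hq2 hq3 _ [hq5 _]]] := shorten_walk E_pos hw.
apply: le_trans hq5; apply: dist_le; split => //.
Qed.

Lemma walk_dist_lt x p : walk_in E x p -> ~~ uniq (x :: p) -> d x (last x p) < plen w x p.
Proof.
move=> hw hu; have [q [hq1 hq2 hq3 _ [_ hq6]]] := shorten_walk E_pos hw.
apply: le_lt_trans (hq6 hu); rewrite -hq2; apply: dist_le; split => //.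
Qed.

Lemma dist_tri a b c : d a c <= d a b + d b c.
Proof.
have [p1 [[h1 l1 _] e1]] := dist_attain a b.
have [p2 [[h2 l2 _] e2]] := dist_attain b c.
have hw : walk_in E a (p1 ++ p2) by apply/walk_cat; rewrite l1.
by have := walk_dist hw; rewrite last_cat l1 l2 plen_cat l1 e1 e2.
Qed.


Definition Dv a := d s a + d a t <= d s t.
Local Notation inD' := (inD e w s t).
Local Notation fR := (forestR e w s t ET).
Local Notation sc := (same_comp e w s t ET).

Lemma ET_e a b : ET a b -> e a b.
Proof. by case: hT => h _ _ _ _; apply: h. Qed.

Lemma ET_sym a b : ET a b -> ET b a.
Proof. by case: hT => _ h _ _ _; apply: h. Qed.

Lemma ET_pos a b : ET a b -> 0 < w a b.
Proof. by move/ET_e; apply: w_pos. Qed.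

Lemma tree_path c : exists p, spath ET s p c /\ plen w s p = d s c.
Proof. by case: hT => _ _ _ _ h; apply: h. Qed.

Lemma spath_ET_E x p y : spath ET x p y -> spath E x p y.
Proof. by case=> h1 h2 h3; split => //; apply: walk_impl h1; exact: ET_e. Qed.

Lemma inD_sym a b : inD' a b -> inD' b a.
Proof. by case=> p [h1 h2 h3]; exists p; split => //; case: h3; [right|left]. Qed.

Lemma fR_sym a b : fR a b -> fR b a.
Proof. by case=> h1 h2; split; [exact: ET_sym|move/inD_sym]. Qed.

Lemma fR_pos a b : fR a b -> 0 < w a b.
Proof. by case=> /ET_pos. Qed.

Lemma sc_refl a : sc a a.
Proof. by exists [::]. Qed.

Lemma sc_trans a b c : sc a b -> sc b c -> sc a c.
Proof.
move=> [p1 [h1 l1]] [p2 [h2 l2]]; exists (p1 ++ p2); split.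
  by apply/walk_cat; rewrite l1.
by rewrite last_cat l1.
Qed.

Lemma sc_sym a b : sc a b -> sc b a.
Proof.
move=> [p [h l]]; exists (rev (belast a p)); split.
  by rewrite -l; apply: walk_rev => //; exact: fR_sym.
by rewrite -l last_rev_belast.
Qed.

Lemma fR_sc a b : fR a b -> sc a b.
Proof. by move=> h; exists [:: b]. Qed.

Lemma sc_walk x p : walk_in sc x p -> sc x (last x p).
Proof.
elim: p x => [|y p IH] x /=; first by move=> _; exact: sc_refl.
by move=> [h1 /IH h2]; apply: sc_trans h1 h2.
Qed.

Lemma Dv_s : Dv s.
Proof.
rewrite /Dv; have : d s s <= plen w s [::] by apply: dist_le; split.
rewrite plen_nil; lra.
Qed.

Lemma Dv_t : Dv t.
Proof.
rewrite /Dv; have : d t t <= plen w t [::] by apply: dist_le; split.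
rewrite plen_nil; lra.
Qed.

Lemma onpath_Dv p c : spath E s p t -> plen w s p = d s t -> c \in s :: p -> Dv c.
Proof.
move=> hp hl /split_vertex0 [p1 [p2 [ep lc]]].
move: hp hl; rewrite ep => /spath_split [h1 h2]; rewrite plen_cat => hl.
have := dist_le h1; have := dist_le h2; rewrite /Dv -lc; lra.
Qed.

Lemma inD_Dv a b : inD' a b -> Dv a /\ Dv b.
Proof.
case=> p [hp hl ho].
case: ho => /zip_mem [ha hb]; split; apply: (onpath_Dv hp hl) => //;
  by rewrite in_cons hb orbT.
Qed.

Lemma prefix_short x p1 p2 y : spath E x (p1 ++ p2) y -> plen w x (p1 ++ p2) = d x y ->
  plen w x p1 = d x (last x p1).
Proof.
move=> /spath_split [h1 h2]; rewrite plen_cat => hl.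
have := dist_le h1; have := dist_le h2; have := dist_tri x (last x p1) y.
move=> *; apply/eqP; rewrite eq_le; apply/andP; split; lra.
Qed.

Lemma Lpre c p : Dv c -> spath E s p c -> plen w s p = d s c ->
  forall a b, (a, b) \in zip (s :: p) p -> inD' a b.
Proof.
move=> hD [hw hl hu] hpl a b hab.
have [pc [[hw2 hl2 hu2] hpc]] := dist_attain c t.
have hW : walk_in E s (p ++ pc) by apply/walk_cat; rewrite hl.
have hlW : last s (p ++ pc) = t by rewrite last_cat hl.
have hplW : plen w s (p ++ pc) = d s c + d c t by rewrite plen_cat hl hpl hpc.
case hU: (uniq (s :: p ++ pc)); last first.
  have := walk_dist_lt hW; rewrite hU hlW hplW => /(_ isT); move: hD; rewrite /Dv; lra.
have hsp : spath E s (p ++ pc) t by split.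
exists (p ++ pc); split => //.
  have := dist_le hsp; move: hD; rewrite /Dv hplW => *.
  apply/eqP; rewrite eq_le; apply/andP; split; lra.
by left; apply: zip_cat_sub.
Qed.


Lemma F3 a b : Dv a -> Dv b -> sc a b -> a = b.
Proof.
move=> ha hb [pr [hr lr]].
case: (eqVneq a b) => // hne; exfalso.
have [q [hq1 hq2 hq3 _ _]] := shorten_walk (w:=w) fR_pos hr.
rewrite lr in hq2.
case: q hq1 hq2 hq3 => [|a1 q'].
  by move=> _ hab; rewrite /= in hab; rewrite hab eqxx in hne.
move=> [hfa hwq] hlq0 hu.
have hlq : last a1 q' = b := hlq0.
have haq : a \notin a1 :: q' by move: hu; rewrite cons_uniq => /andP[].
have [pa [hpa epa]] := tree_path a; have [pb [hpb epb]] := tree_path b.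
have Da := Lpre ha (spath_ET_E hpa) epa; have Db := Lpre hb (spath_ET_E hpb) epb.
have hna : ~ inD' a a1 by case: hfa.
have hna' : ~ inD' a1 a by move/inD_sym.
pose r' := fun c d => ET c d /\ ~ ((c = a /\ d = a1) \/ (c = a1 /\ d = a)).
have hDr c d : ET c d /\ inD' c d -> r' c d.
  by move=> [h1 h2]; split => // -[[ec ed]|[ec ed]]; subst; [apply: hna|apply: hna'].
have wpa : walk_in (fun c d => ET c d /\ inD' c d) s pa.
  case: hpa => hpa1 _ _; apply/walk_zip => c d hcd; split; last exact: Da.
  exact: (proj1 (walk_zip _ _ _) hpa1).
have wpb : walk_in (fun c d => ET c d /\ inD' c d) s pb.
  case: hpb => hpb1 _ _; apply/walk_zip => c d hcd; split; last exact: Db.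
  exact: (proj1 (walk_zip _ _ _) hpb1).
have lpb : last s pb = b by case: hpb.
have lpa : last s pa = a by case: hpa.
have hW : walk_in r' a1 (q' ++ (rev (belast s pb) ++ pa)).
  apply/walk_cat; split.
    apply/walk_zip => c d hcd; have [hc hd] := zip_mem hcd.
    split; first by case: ((proj1 (walk_zip _ _ _) hwq) _ _ hcd).
    move=> [[ec ed]|[ec ed]]; subst.
      by rewrite hc in haq.
    by rewrite in_cons hd orbT in haq.
  rewrite hlq; apply/walk_cat; split.
    rewrite -lpb; apply: walk_impl (walk_rev _ wpb) => //.
    by move=> c d [/ET_sym h1 /inD_sym h2].
  rewrite -lpb last_rev_belast; exact: walk_impl wpa.
have r'pos c d : r' c d -> 0 < w c d by case=> /ET_pos.
have [m [hm1 hm2 hm3 _ _]] := shorten_walk (w:=w) r'pos hW.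
rewrite !last_cat hlq -lpb last_rev_belast lpa in hm2.
case: hT => _ _ _ hac _.
have ha1 : a1 != a.
  by apply/eqP => ea; move: (ET_e (proj1 hfa)); rewrite ea e_irr.
case/lastP: m hm1 hm2 hm3 => [|m' c]; first by move=> _ /= ea; rewrite ea eqxx in ha1.
rewrite last_rcons => hm1 ec hm3; subst c.
move: hm1; rewrite -cats1 => /walk_cat [hm1 /= [hr' _]].
case: m' hm1 hm3 hr' => [|h m''] hm1 hm3 hr'.
  by case: hr' => _; apply; right.
apply: hac; exists a, (a1 :: h :: m''); split => //.
- move: hm3; rewrite -rcons_cons rcons_uniq => /andP[h1 h2].
  by rewrite cons_uniq h1 h2.
- by split; [case: hfa|apply: walk_impl hm1 => c d []].
- by case: hr'.
Qed.

Lemma F4 a b : e a b -> ~ inD' a b -> ~ Etilde e w s t ET a b -> sc a b.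
Proof.
move=> he hn hE; case: (pselect (ET a b)) => hET; first by apply: fR_sc.
by apply: contrapT => hsc; apply: hE; split.
Qed.

Lemma run p : forall x g, walk_in (fun a b => inD' a b \/ sc a b) x p -> uniq (x :: p) ->
  Dv (last x p) -> Dv g -> sc g x -> g \notin p -> g = x /\ walk_in inD' x p.
Proof.
elim: p => [|y p IH] x g hw hu hl hg hgx hgp.
  by split => //; exact: F3 hg hl hgx.
case: hw => hxy hw'.
have hu' : uniq (y :: p) by move: hu; rewrite cons_uniq => /andP[].
have hyp : y \notin p by move: hu'; rewrite cons_uniq => /andP[].
have hgp' : g \notin p by move: hgp; rewrite in_cons negb_or => /andP[].
case: (pselect (inD' x y)) => hD.
  have [Dx Dy] := inD_Dv hD.
  have gx := F3 hg Dx hgx.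
  have [_ IHw] := IH y y hw' hu' hl Dy (sc_refl y) hyp.
  by split.
have sxy : sc x y by case: hxy.
have [gy _] := IH y g hw' hu' hl hg (sc_trans hgx sxy) hgp'.
by move: hgp; rewrite gy mem_head.
Qed.

Lemma KL q : spath E s q t -> (exists a b, on_path s q a b /\ ~ inD' a b) ->
  exists a b, (a, b) \in zip (s :: q) q /\ Etilde e w s t ET a b.
Proof.
move=> [hw hl hu] [a [b [hab hn]]].
apply: contrapT => hno.
have hw2 : walk_in (fun a b => inD' a b \/ sc a b) s q.
  apply/walk_zip => c d hcd; case: (pselect (inD' c d)) => hD; [by left|right].
  apply: F4 => //; first exact: (proj1 (walk_zip _ _ _) hw _ _ hcd).
  by move=> hE; apply: hno; exists c, d.
have hsq : s \notin q by move: hu; rewrite cons_uniq => /andP[].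
have [_ hDw] := run hw2 hu (ltac:(rewrite hl; exact: Dv_t)) Dv_s (sc_refl s) hsq.
case: hab => /(proj1 (walk_zip _ _ _) hDw) //; by move/inD_sym.
Qed.


Definition f a b := d s a + w a b + d b t.
Local Notation Et := (Etilde e w s t ET).

Lemma fvalE a b : Et a b -> fval e w s t ET a b = (f a b)%:E.
Proof. by move=> h; rewrite /fval; case: pselect. Qed.

Lemma Et_sym a b : Et a b -> Et b a.
Proof.
move=> [h1 h2 h3 h4]; split.
- by rewrite e_sym.
- by move/ET_sym.
- by move/inD_sym.
- by move/sc_sym.
Qed.

Lemma spath_tail (r : V -> V -> Prop) a b q y : spath r a (b :: q) y -> spath r b q y /\ r a b.
Proof.
move=> [[hab hw] hl hu]; split => //; split => //.
by move: hu; rewrite cons_uniq => /andP[].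
Qed.

Lemma opt_bound q : outward e w s t q -> exists a b, Et a b /\ f a b <= plen w s q.
Proof.
move=> [hsp hout]; have [a [b [hab hE]]] := KL hsp hout.
exists a, b; split => //.
have [q1 [q2 [eq la]]] := split_edge hab.
move: hsp; rewrite eq => /spath_split [h1]; rewrite la => /spath_tail [h2 _].
rewrite plen_cat la plen_cons /f.
have := dist_le h1; have := dist_le h2; rewrite la; lra.
Qed.

Lemma first_D p x : walk_in (fun a b => e a b /\ ~ Et a b) x p -> Dv (last x p) ->
  exists p1 p2, [/\ p = p1 ++ p2, Dv (last x p1) & forall c, c \in x :: p1 -> sc x c].
Proof.
elim: p x => [|y p IH] x hw hl.
  exists [::], [::]; split => // c; rewrite mem_seq1 => /eqP->; exact: sc_refl.
case: (pselect (Dv x)) => hDx.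
  exists [::], (y :: p); split => // c; rewrite mem_seq1 => /eqP->; exact: sc_refl.
case: hw => [[hexy hnE] hw'].
have hnD : ~ inD' x y by move/inD_Dv => [].
have sxy := F4 hexy hnD hnE.
have [p1 [p2 [ep hD hsc]]] := IH y hw' hl.
exists (y :: p1), p2; split => //; first by rewrite ep.
move=> c; rewrite in_cons => /orP[/eqP->|hc]; first exact: sc_refl.
exact: sc_trans sxy (hsc c hc).
Qed.

Lemma tail_R p1 z' p3 c : spath ET s (p1 ++ z' :: p3) c -> plen w s (p1 ++ z' :: p3) = d s c ->
  ~ inD' (last s p1) z' -> sc (last s p1) c.
Proof.
move=> hsp hpl hn.
have hspE := spath_ET_E hsp.
have [_ [hw hl _]] := spath_split hsp.
exists (z' :: p3); split => //.
apply/walk_zip => a b hab; split; first exact: (proj1 (walk_zip _ _ _) hw).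
move=> hD; have [_ Db] := inD_Dv hD.
have [qa [qb [eq la]]] := split_edge hab.
have eP : p1 ++ z' :: p3 = (p1 ++ rcons qa b) ++ qb by rewrite eq -catA cat_rcons.
move: hspE hpl; rewrite eP => hspE hpl.
have hpl' := prefix_short hspE hpl.
have [hsp' _] := spath_split hspE.
have lb : last s (p1 ++ rcons qa b) = b by rewrite last_cat last_rcons.
rewrite lb in hsp' hpl'.
have := Lpre Db hsp' hpl'.
have [rest er] : exists rest, rcons qa b = z' :: rest.
  case: qa eq {la eP hspE hpl hpl' hsp' lb} => [|h qa'] /= [-> _].
    by exists [::].
  by exists (rcons qa' b).
rewrite er => /(_ _ _ (zip_mid s z' p1 rest)); exact: hn.
Qed.


Lemma E_sym a b : E a b -> E b a.
Proof. by rewrite /= e_sym. Qed.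

Lemma dist_via a c p : walk_in E c p -> d a (last c p) <= d a c + plen w c p.
Proof.
move=> hw; have [pac [[h1 l1 _] e1]] := dist_attain a c.
have hW : walk_in E a (pac ++ p) by apply/walk_cat; rewrite l1.
by have := walk_dist hW; rewrite last_cat l1 plen_cat l1 e1.
Qed.

Lemma dist_via_rev a c p : walk_in E c p -> d (last c p) a <= plen w c p + d c a.
Proof.
move=> hw; have [pca [[h1 l1 _] e1]] := dist_attain c a.
have hr := walk_rev E_sym hw.
have hW : walk_in E (last c p) (rev (belast c p) ++ pca).
  by apply/walk_cat; rewrite last_rev_belast.
have := walk_dist hW; rewrite last_cat last_rev_belast l1 plen_cat last_rev_belast e1.
by rewrite (plen_rev (r := E)) //; move=> x y; exact: w_sym.
Qed.

Lemma dist_via_rev2 a c p : walk_in E c p -> d a c <= d a (last c p) + plen w c p.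
Proof.
move=> hw; have [pac [[h1 l1 _] e1]] := dist_attain a (last c p).
have hr := walk_rev E_sym hw.
have hW : walk_in E a (pac ++ rev (belast c p)) by apply/walk_cat; rewrite l1.
have := walk_dist hW; rewrite last_cat l1 last_rev_belast plen_cat l1 e1.
by rewrite (plen_rev (r := E)) //; move=> x y; exact: w_sym.
Qed.


Lemma claim1 (F : R) u v : Et u v -> f u v = F ->
  (forall a b, Et a b -> F <= f a b) ->
  (forall a b, Et a b -> f a b = F -> d v t <= d b t) ->
  exists p, [/\ spath E s p t, plen w s p = F & (u, v) \in zip (s :: p) p].
Proof.
move=> huv hF hmin htie.
have [pu [hpu epu]] := tree_path u.
have hpuE := spath_ET_E hpu.
have [pv [hpv epv]] := dist_attain v t.
have [wpu lpu upu] := hpuE.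
have [wpv lpv upv] := hpv.
case: (huv) => euv _ _ hnsc.
have hW : walk_in E s (pu ++ v :: pv).
  by apply/walk_cat; split; [exact: wpu|rewrite lpu; split].
have hlW : last s (pu ++ v :: pv) = t by rewrite last_cat lpu.
have hplW : plen w s (pu ++ v :: pv) = F by rewrite plen_cat lpu plen_cons epu epv -hF /f addrA.
case hU: (uniq (s :: pu ++ v :: pv)).
  exists (pu ++ v :: pv); split => //; rewrite -lpu; exact: zip_mid.
exfalso.
have noE a b : (a, b) \in zip (v :: pv) pv -> ~ Et a b.
  move=> hab hE; have [pa [pc [epv' la]]] := split_edge hab.
  have hpv' : spath E v (pa ++ b :: pc) t by rewrite -epv'.
  have [h1 h2] := spath_split hpv'; rewrite la in h2; have [h3 _] := spath_tail h2.
  have hw2 : walk_in E s (pu ++ v :: pa).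
    by apply/walk_cat; split; [exact: wpu|rewrite lpu; split => //; case: h1].
  have := walk_dist hw2; rewrite last_cat lpu /= la plen_cat lpu plen_cons epu => i1.
  have i2 := dist_le h3.
  have i3 := epv; rewrite epv' plen_cat la plen_cons in i3.
  have i4 := plen_ge0 E_pos (let: And3 x _ _ := h1 in x).
  have [eab _ _ _] := hE; have i5 := w_pos eab.
  have i6 := hmin a b hE.
  have hle : f a b <= F by move: hF; rewrite /f; lra.
  have efab : f a b = F by apply/eqP; rewrite eq_le hle i6.
  have i7 := htie a b hE efab.
  lra.
have wpv' : walk_in (fun a b => e a b /\ ~ Et a b) v pv.
  apply/walk_zip => a b hab; split; [exact: (proj1 (walk_zip _ _ _) wpv) | exact: noE].
have [p1 [p2 [ep hDq hsc]]] := first_D wpv' (ltac:(rewrite lpv; exact: Dv_t)).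
have [z hz1 hz2] : exists2 z, z \in s :: pu & z \in v :: pv.
  move: hU; rewrite -cat_cons cat_uniq upu upv andbT andTb => /negbFE /hasP [z hz hz'].
  by exists z.
have [pu1 [pu2 [epu' lz]]] := split_vertex0 hz1.
have hpu' : spath ET s (pu1 ++ pu2) u by rewrite -epu'.
have [su1 su2] := spath_split (spath_ET_E hpu'); rewrite lz in su1 su2.
have hmvu := hmin v u (Et_sym huv).
have wvu : w v u = w u v by rewrite w_sym // e_sym.
have hzv : z \in v :: pv by [].
move: hz2; rewrite ep -cat_cons mem_cat => /orP[hz2|hz2].
  have svz := hsc z hz2.
  case: pu2 epu' lz hpu' su2 => [|z' pu3] epu' lz hpu' su2.
    have ezu : z = u by case: su2.
    by apply: hnsc; apply: sc_sym; rewrite -ezu.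
  case: (pselect (inD' z z')) => hD; last first.
    have epu2 := epu; rewrite epu' in epu2.
    have := tail_R hpu' epu2; rewrite lz => /(_ hD) szu.
    by apply: hnsc; apply: sc_sym; exact: sc_trans svz szu.
  have [_ Dz'] := inD_Dv hD.
  have [pa [pc [epv2 lza]]] := split_vertex0 hzv.
  have hpv2 : spath E v (pa ++ pc) t by rewrite -epv2.
  have [sa sc'] := spath_split hpv2; rewrite lza in sa sc'.
  have j1 := epv; rewrite epv2 plen_cat lza in j1.
  have j2 := dist_le sc'.
  have j3 := epu; rewrite epu' plen_cat lz plen_cons in j3.
  have j4 := dist_le su1.
  have [[wp3 lp3 _] ezz'] := spath_tail su2.
  have j5 := dist_via s wp3; rewrite lp3 in j5.
  have j6 := Dz'; rewrite /Dv in j6.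
  have j7 := dist_tri s z t.
  have j8 := dist_via_rev2 s (let: And3 x _ _ := sa in x); rewrite lza in j8.
  have j9 := dist_via_rev t wp3; rewrite lp3 in j9.
  have j10 := w_pos ezz'.
  move: hmvu hF; rewrite /f wvu; lra.
have [pb [pc [ep2 lzb hne]]] := split_vertex (last v p1) hz2.
have hpv2 : spath E v (p1 ++ pb ++ pc) t by rewrite -ep2 -ep.
have [s1 s2] := spath_split hpv2.
have [s3 s4] := spath_split s2; rewrite lzb in s3 s4.
have k1 := epv; rewrite ep ep2 !plen_cat lzb in k1.
have k2 := dist_le s4.
have k3 := dist_le s1.
have k4 := dist_tri v (last v p1) t.
have k5 := hDq; rewrite /Dv in k5.
have k6 := dist_tri s z t.
have k7 := dist_via_rev2 s (let: And3 x _ _ := s1 in x).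
have [wp2 lp2 _] := su2.
have k8 := dist_via_rev t wp2; rewrite lp2 in k8.
have k9 := plen_gt0 E_pos (let: And3 x _ _ := s3 in x) hne.
have k10 := epu; rewrite epu' plen_cat lz in k10.
have k11 := dist_le su1.
move: hmvu hF; rewrite /f wvu; lra.
Qed.


Lemma main x y (hmin : forall u v, (fval e w s t ET x y <= fval e w s t ET u v)%E)
  (hfin : fval e w s t ET x y <> +oo%E) :
  (exists p, [/\ spath (fun a b => e a b) s p t,
                 (plen w s p)%:E = fval e w s t ET x y
               & exists u v, on_path s p u v /\ Etilde e w s t ET u v]) /\
  (forall p, [/\ spath (fun a b => e a b) s p t,
                 (plen w s p)%:E = fval e w s t ET x y
               & exists u v, on_path s p u v /\ Etilde e w s t ET u v] ->
     optimal_outward e w s t p).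
Proof using e_irr e_sym w_sym w_pos G_conn hT.
have hxy : Et x y by move: hfin; rewrite /fval; case: pselect.
set F := f x y.
have hFv : fval e w s t ET x y = F%:E := fvalE hxy.
have hmin' a b : Et a b -> F <= f a b.
  by move=> h; have := hmin a b; rewrite hFv (fvalE h) lee_fin.
split.
  have [[u v] [_ [huv hfuv] htie]] := seq_min (l := enum {: V * V})
    (fun pr => d pr.2 t) (P := fun pr => Et pr.1 pr.2 /\ f pr.1 pr.2 = F)
    (ex_intro _ (x, y) (conj (mem_enum _ _) (conj hxy erefl))).
  have htie' a b : Et a b -> f a b = F -> d v t <= d b t.
    by move=> h1 h2; apply: (htie (a, b)) => //; rewrite mem_enum.
  have [p [hp hpl hz]] := claim1 huv hfuv hmin' htie'.
  exists p; split => //; first by rewrite hFv hpl.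
  by exists u, v; split => //; left.
move=> p [hsp hpl [u [v [hon hE]]]]; split.
  split => //; exists u, v; split => //; by case: hE.
move=> q hq; have [a [b [hab hle]]] := opt_bound hq.
have := hmin' a b hab; move: hpl; rewrite hFv => -[->]; lra.
Qed.

End Main.

Theorem lemma13 (V : finType) (R : realType) (e : rel V) (w : V -> V -> R)
  (s t : V) (ET : V -> V -> Prop)
  (e_irr : irreflexive e) (e_sym : symmetric e)
  (w_sym : forall x y, e x y -> w x y = w y x)
  (w_pos : forall x y, e x y -> 0 < w x y)
  (G_conn : forall u v, exists p, spath (fun a b => e a b) u p v)
  (hT : sp_tree e w s ET)
  (x y : V)
  (hmin : forall u v, (fval e w s t ET x y <= fval e w s t ET u v)%E)
  (hfin : fval e w s t ET x y <> +oo%E) :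
  (exists p, [/\ spath (fun a b => e a b) s p t,
                 (plen w s p)%:E = fval e w s t ET x y
               & exists u v, on_path s p u v /\ Etilde e w s t ET u v]) /\
  (forall p, [/\ spath (fun a b => e a b) s p t,
                 (plen w s p)%:E = fval e w s t ET x y
               & exists u v, on_path s p u v /\ Etilde e w s t ET u v] ->
     optimal_outward e w s t p).
Proof. exact: (main e_irr e_sym w_sym w_pos G_conn hT hmin hfin). Qed.
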